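(* Fix $k\ge1$ and $\ell\ge1$. For every integer $j$ with $1+F_{2\ell+1}\le j\le F_{2\ell+3}-1$, $$q(j+1)-q(j)=q(j-F_{2\ell+1}+1)-q(j-F_{2\ell+1}).$$
   Context: Fibonacci numbers: $F_1=F_2=1$, $F_{n+1}=F_n+F_{n-1}$ for $n\ge2$. Chung–Graham decomposition: every positive integer $n$ has a unique representation $n=\sum_{i\ge1}c_iF_{2i}$ with $c_i\in\{0,1,2\}$, only finitely many nonzero, such that whenever $c_i=c_j=2$ with $i<j$ there is $k$ with $i<k<j$ and $c_k=0$. Let $\mathcal{CG}(n)$ be the set of $F_{2i}$ with $c_i\neq0$. For $k\ge1$, $A_{2k}=\{n\ge1:\min\mathcal{CG}(n)=F_{2k}\}$, and $q(1)<q(2)<q(3)<\cdots$ denote the elements of $A_{2k}$ listed in increasing order. *)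

(* Defs.v *)
From mathcomp Require Import all_boot.
Set Implicit Arguments. Unset Strict Implicit. Unset Printing Implicit Defensive.

Fixpoint F (n : nat) : nat :=
  match n with
  | 0 => 0
  | 1 => 1
  | (m.+1 as p).+1 => F p + F m
  end.

(* [CGrep c n]: the digit function c (c i is the coefficient of F_{2i}, i >= 1;
   c 0 is forced to be 0) is a Chung--Graham decomposition of n. *)
Definition CGrep (c : nat -> nat) (n : nat) : Prop :=
  c 0 = 0 /\
  (forall i, c i <= 2) /\
  (exists N, (forall i, N < i -> c i = 0) /\
             n = \sum_(1 <= i < N.+1) c i * F (2 * i)) /\
  (forall i j, 1 <= i -> i < j -> c i = 2 -> c j = 2 ->
     exists m, i < m /\ m < j /\ c m = 0).

Definition A2k (k n : nat) : Prop :=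
  1 <= n /\
  exists c, CGrep c n /\ 1 <= k /\ c k <> 0 /\
    (forall i, 1 <= i -> c i <> 0 -> F (2 * k) <= F (2 * i)).

(* Main.v *)
Require Import Defs.
From mathcomp Require Import all_boot zify.

Lemma FS n : F n.+2 = F n.+1 + F n. Proof. by []. Qed.
Lemma Fpos n : 0 < F n.+1.
Proof. elim: n => [//|n IH]. rewrite FS. lia. Qed.
Lemma Fmono n : F n <= F n.+1.
Proof. case: n => [//|n]. rewrite FS. lia. Qed.
Lemma Fe1 m : F (2*m.+1) = F (2*m).+1 + F (2*m).
Proof. have -> : 2*m.+1 = (2*m).+2 by lia. by rewrite FS. Qed.
Lemma Fo1 m : F (2*m.+1).+1 = F (2*m.+1) + F (2*m).+1.
Proof. have -> : (2*m.+1).+1 = (2*m).+3 by lia. rewrite FS. by have -> : 2*m.+1 = (2*m).+2 by lia. Qed.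
Lemma Fe_lt i j : i < j -> F (2*i) < F (2*j).
Proof.
elim: j => [//|j IH] Hij. rewrite Fe1.
have := Fpos (2*j). case: (ltnP i j) => H.
  have := IH H. lia.
have -> : i = j by lia. lia.
Qed.
Lemma Fe_le i j : i <= j -> F (2*i) <= F (2*j).
Proof. rewrite leq_eqVlt => /orP[/eqP->//|/Fe_lt]; lia. Qed.
Lemma Fe_leE i j : (F (2*i) <= F (2*j)) = (i <= j).
Proof. case: (leqP i j) => H; first by rewrite Fe_le. have := @Fe_lt j i H. lia. Qed.

Fixpoint vr (c : nat -> nat) (N : nat) : nat :=
  match N with 0 => 0 | N'.+1 => vr c N' + c N'.+1 * F (2 * N'.+1) end.

Lemma vrE c N : vr c N = \sum_(1 <= i < N.+1) c i * F (2 * i).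
Proof.
elim: N => [|N IH]; first by rewrite big_geq.
by rewrite /= big_nat_recr //= IH.
Qed.

Lemma vrS c N : vr c N.+1 = vr c N + c N.+1 * F (2 * N.+1). Proof. by []. Qed.

Definition valid (c : nat -> nat) :=
  c 0 = 0 /\ (forall i, c i <= 2) /\
  (forall i j, 1 <= i -> i < j -> c i = 2 -> c j = 2 ->
     exists m, i < m /\ m < j /\ c m = 0).
Definition supp (c : nat -> nat) N := forall i, N < i -> c i = 0.

Lemma vr_ext c d N : (forall i, 1 <= i <= N -> c i = d i) -> vr c N = vr d N.
Proof.
elim: N => [//|N IH] H /=. rewrite IH; last by move=> i Hi; apply: H; lia.
by rewrite H //; lia.
Qed.
Lemma vr_supp c N M : supp c N -> N <= M -> vr c M = vr c N.
Proof.
move=> Hs; elim: M => [|M IH] HM; first by have -> : N = 0 by lia.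
case: (leqP N M) => H.
  by rewrite /= IH // Hs ?muln0 ?addn0 //; lia.
by have -> : N = M.+1 by lia.
Qed.
Lemma vr_ge c N p : 1 <= p <= N -> c p * F (2*p) <= vr c N.
Proof.
elim: N => [|N IH] H; first lia.
rewrite /=. case: (ltnP p N.+1) => H2.
  have := IH ltac:(lia). lia.
have -> : p = N.+1 by lia. exact: leq_addl.
Qed.
Lemma vr0 c N : (forall i, 1 <= i <= N -> c i = 0) -> vr c N = 0.
Proof. move=> H; rewrite (@vr_ext c (fun _ => 0)) //. by elim: N {H} => //= N ->. Qed.

Lemma bounds c : (forall i, c i <= 2) ->
  (forall i j, 1 <= i -> i < j -> c i = 2 -> c j = 2 ->
     exists m, i < m /\ m < j /\ c m = 0) ->
  forall m, vr c m < F (2*m).+2 /\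
    ((forall i, 1 <= i <= m -> c i = 2 -> exists p, i < p <= m /\ c p = 0) ->
      vr c m < F (2*m).+1).
Proof.
move=> H2 Hc; elim=> [|m [IHU IHV]]; first by split.
have Hcm := H2 m.+1.
have E1 := Fe1 m. have E2 := Fo1 m. rewrite FS E2 E1.
split.
- rewrite vrS. case: (c m.+1 =P 2) => Heq.
  + have : vr c m < F (2*m).+1.
      apply: IHV => i Hi Hci.
      have [p [? [? ?]]] := Hc i m.+1 ltac:(lia) ltac:(lia) Hci Heq.
      exists p; split=> //; lia.
    rewrite Heq E1. lia.
  + move: IHU; rewrite FS E1. have Hc01 : c m.+1 = 0 \/ c m.+1 = 1 by lia. case: Hc01 => ->; lia.
- move=> HR; rewrite vrS.
  have Hne : c m.+1 != 2.
    apply/eqP=> Heq. have [p [? ?]] := HR m.+1 ltac:(lia) Heq. lia.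
  case: (c m.+1 =P 0) => H0.
    rewrite H0. move: IHU; rewrite FS. rewrite ?E1. lia.
  have H1 : c m.+1 = 1 by lia.
  have : vr c m < F (2*m).+1.
    apply: IHV => i Hi Hci.
    have [p [? ?]] := HR i ltac:(lia) Hci.
    exists p; split=> //. have : p != m.+1 by apply/eqP => E; subst; lia. lia.
  rewrite H1 E1. lia.
Qed.

Lemma lowb c m : forall i, 1 <= i <= m -> c i = 2 ->
  F (2*m).+1 <= vr c m \/ exists p, i < p <= m /\ c p = 0.
Proof.
elim: m => [|m IH] i Hi Hci; first lia.
case: (ltnP i m.+1) => H.
  have [H1|[p [? ?]]] := IH i ltac:(lia) Hci; last by right; exists p; split=> //; lia.
  case: (c m.+1 =P 0) => H0; first by right; exists m.+1; split=> //; lia.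
  left. rewrite vrS Fo1 Fe1. have : 1 <= c m.+1 by lia. move: H1. nia.
left. have Ei : i = m.+1 by lia. subst i. rewrite vrS Hci.
rewrite Fo1 Fe1. have := Fmono (2*m). lia.
Qed.

Definition Pk k n := exists c N, valid c /\ supp c N /\ n = vr c N /\ c k <> 0 /\
  (forall i, i < k -> c i = 0).

Lemma A2k_Pk k n : 1 <= k -> (A2k k n <-> Pk k n).
Proof.
move=> Hk; split.
- move=> [Hn [c [[H0 [H2 [[N [HN ->]] Hc]]] [_ [Hck Hmin]]]]].
  exists c, N; split; first by [].
  split; first by [].
  split; first by rewrite vrE.
  split; first by [].
  move=> i Hi. case: i Hi => [//|i] Hi.
  case: (c i.+1 =P 0) => // Hne. have := Hmin i.+1 isT Hne. rewrite Fe_leE. lia.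
- move=> [c [N [[H0 [H2 Hc]] [Hs [-> [Hck Hmin]]]]]].
  have HkN : k <= N.
    case: (leqP k N) => // H. by have := Hs k H.
  split.
    have := @vr_ge c N k ltac:(lia). have := Fpos (2*k).-1.
    have -> : (2*k).-1.+1 = 2*k by lia. nia.
  exists c; split.
    split=> //; split=> //; split=> //. exists N; split=> //. by rewrite vrE.
  split=> //; split=> // i Hi Hci. rewrite Fe_leE.
  case: (leqP k i) => // H. by have := Hmin i H.
Qed.

Lemma supp_lt c N m : supp c N -> vr c N < F (2*m.+1) -> supp c m.
Proof.
move=> Hs Hv i Hi. case: (leqP i N) => H; last exact: Hs.
case: (c i =P 0) => // Hne. exfalso.
have := @vr_ge c N i ltac:(lia). have := @Fe_le m.+1 i Hi. nia.
Qed.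

Lemma valid_bounds c m : valid c -> vr c m < F (2*m.+1).
Proof.
move=> [_ [H2 Hc]]. have [U _] := @bounds c H2 Hc m.
by have -> : 2*m.+1 = (2*m).+2 by lia.
Qed.

Lemma remove_top c m k : valid c -> supp c m.+1 -> k <= m -> c k <> 0 ->
  (forall i, i < k -> c i = 0) -> Pk k (vr c m).
Proof.
move=> [H0 [H2 Hc]] Hs Hkm Hck Hmin.
exists (fun i => if i == m.+1 then 0 else c i), m.
split; [split; [|split]|split; [|split; [|split]]].
- by rewrite H0.
- move=> i; case: (i == m.+1) => //.
- move=> i j Hi Hij. case: (i =P m.+1) => // _ Hci. case: (j =P m.+1) => // _ Hcj.
  have [p [? [? Hp]]] := Hc i j Hi Hij Hci Hcj. exists p; split=> //; split=> //.
  by case: (p == m.+1).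
- move=> i Hi. case: (i =P m.+1) => // Hne. apply: Hs. lia.
- apply: vr_ext => i Hi. case: (i =P m.+1) => // E. lia.
- case: (k =P m.+1) => // E. lia.
- move=> i Hi. case: (i =P m.+1) => // _. exact: Hmin.
Qed.

Lemma add_top c m d k : valid c -> supp c m -> 1 <= d <= 2 ->
  (d = 2 -> forall i, 1 <= i <= m -> c i = 2 -> exists p, i < p <= m /\ c p = 0) ->
  k <= m -> c k <> 0 -> (forall i, i < k -> c i = 0) ->
  Pk k (vr c m + d * F (2*m.+1)).
Proof.
move=> [H0 [H2 Hc]] Hs Hd Hd2 Hkm Hck Hmin.
exists (fun i => if i == m.+1 then d else c i), m.+1.
split; [split; [|split]|split; [|split; [|split]]].
- by rewrite H0.
- move=> i; case: (i == m.+1) => //; lia.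
- move=> i j Hi Hij. case: (j =P m.+1) => Ej.
  + subst j. case: (i =P m.+1) => Ei; first lia. move=> Hci Hd2'.
    have [p [Hp1 Hp2]] := Hd2 Hd2' i ltac:(lia) Hci. exists p; split; first lia.
    split; first lia. case: (p =P m.+1) => // E; lia.
  + case: (i =P m.+1) => Ei; first by move=> _; rewrite Hs //; lia.
    move=> Hci Hcj.
    have Hjm : j <= m. case: (leqP j m) => // H. by move: Hcj; rewrite Hs.
    have [p [? [? Hp]]] := Hc i j Hi Hij Hci Hcj. exists p; split=> //; split=> //.
    case: (p =P m.+1) => // E; lia.
- move=> i Hi. case: (i =P m.+1) => // Hne; first lia. apply: Hs. lia.
- rewrite vrS eqxx. congr (_ + _). apply: vr_ext => i Hi. case: (i =P m.+1) => // E. lia.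
- case: (k =P m.+1) => // E. lia.
- move=> i Hi. case: (i =P m.+1) => // E; first lia. exact: Hmin.
Qed.

Lemma F2 m : F (2*m.+2) = 2 * F (2*m.+1) + F (2*m).+1.
Proof. rewrite Fe1 Fo1. lia. Qed.

Lemma top_dec k m n : Pk k n -> n < F (2*m.+2) ->
  exists c, valid c /\ supp c m.+1 /\ n = vr c m + c m.+1 * F (2*m.+1) /\
    vr c m < F (2*m.+1) /\ c k <> 0 /\ (forall i, i < k -> c i = 0).
Proof.
move=> [c [N [Hv [Hs [-> [Hck Hmin]]]]]] Hn.
have Hs' := @supp_lt c N m.+1 Hs Hn.
exists c; split=> //; split=> //; split.
  rewrite -vrS. case: (leqP N m.+1) => H.
    by rewrite (@vr_supp c N m.+1 Hs H).
  by rewrite (@vr_supp c m.+1 N Hs' (ltnW H)).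
split=> //. exact: valid_bounds.
Qed.

Lemma S1 k m x : 1 <= k -> k <= m -> x < F (2*m.+1) ->
  Pk k (F (2*m.+1) + x) <-> Pk k x.
Proof.
move=> Hk Hkm Hx; split.
- move=> HP.
  have Hn : F (2*m.+1) + x < F (2*m.+2) by rewrite F2; lia.
  have [c [Hv [Hs [He [Hb [Hck Hmin]]]]]] := @top_dec k m _ HP Hn.
  have Hv' := Hv. move: Hv' => [_ [H2 _]].
  have H1 : c m.+1 = 1.
    have := H2 m.+1. case: (c m.+1) He => [|[|[|?]]] He; lia.
  rewrite H1 mul1n in He.
  have -> : x = vr c m by lia.
  exact: (@remove_top c m k Hv Hs Hkm Hck Hmin).
- move=> [c [N [Hv [Hs [Hxe [Hck Hmin]]]]]].
  have Hs' := @supp_lt c N m Hs (ltac:(lia) : vr c N < F (2*m.+1)).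
  have HN : x = vr c m.
    case: (leqP N m) => H. by rewrite Hxe (@vr_supp c N m Hs H).
    by rewrite Hxe -(@vr_supp c m N Hs' (ltnW H)).
  have := @add_top c m 1 k Hv Hs' isT (fun E => ltac:(discriminate E)) Hkm Hck Hmin.
  by rewrite -HN mul1n addnC.
Qed.

Lemma S2 k m x : 1 <= k -> k <= m -> x < F (2*m).+1 ->
  Pk k (2 * F (2*m.+1) + x) <-> Pk k x.
Proof.
move=> Hk Hkm Hx; have HX : F (2*m).+1 <= F (2*m.+1) by rewrite Fe1; lia.
split.
- move=> HP.
  have Hn : 2 * F (2*m.+1) + x < F (2*m.+2) by rewrite F2; lia.
  have [c [Hv [Hs [He [Hb [Hck Hmin]]]]]] := @top_dec k m _ HP Hn.
  have Hv' := Hv. move: Hv' => [_ [H2 _]].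
  have H1 : c m.+1 = 2.
    have := H2 m.+1. case: (c m.+1) He => [|[|[|?]]] He; lia.
  rewrite H1 in He.
  have -> : x = vr c m by lia.
  exact: (@remove_top c m k Hv Hs Hkm Hck Hmin).
- move=> [c [N [Hv [Hs [Hxe [Hck Hmin]]]]]].
  have Hs' := @supp_lt c N m Hs (ltac:(lia) : vr c N < F (2*m.+1)).
  have HN : x = vr c m.
    case: (leqP N m) => H. by rewrite Hxe (@vr_supp c N m Hs H).
    by rewrite Hxe -(@vr_supp c m N Hs' (ltnW H)).
  have Hd2 : 2 = 2 -> forall i, 1 <= i <= m -> c i = 2 -> exists p, i < p <= m /\ c p = 0.
    move=> _ i Hi Hci. have [H|//] := @lowb c m i Hi Hci. lia.
  have := @add_top c m 2 k Hv Hs' isT Hd2 Hkm Hck Hmin.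
  by rewrite -HN addnC.
Qed.

Lemma S0 k x : 1 <= k -> x < F (2*k.+1) ->
  Pk k x <-> (x = F (2*k) \/ x = 2 * F (2*k)).
Proof.
case: k => [//|k] _ Hx; split.
- move=> [c [N [[H0 [H2 Hc]] [Hs [Hxe [Hck Hmin]]]]]].
  have Hs' := @supp_lt c N k.+1 Hs (ltac:(lia) : vr c N < F (2*k.+2)).
  have HN : x = vr c k.+1.
    case: (leqP N k.+1) => H. by rewrite Hxe (@vr_supp c N k.+1 Hs H).
    by rewrite Hxe -(@vr_supp c k.+1 N Hs' (ltnW H)).
  rewrite HN vrS vr0; last by move=> i Hi; apply: Hmin; lia.
  have := H2 k.+1. case: (c k.+1) Hck => [|[|[|?]]] //= _ _; lia.
- move=> Hd.
  have [d [Hd1 ->]] : exists d, 1 <= d <= 2 /\ x = d * F (2*k.+1).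
    by case: Hd => ->; [exists 1 | exists 2]; rewrite ?mul1n.
  exists (fun i => if i == k.+1 then d else 0), k.+1.
  split; [split; [|split]|split; [|split; [|split]]].
  + by [].
  + move=> i; case: (i == k.+1) => //; lia.
  + move=> i j Hi Hij. case: (i =P k.+1) => Ei; case: (j =P k.+1) => Ej //; lia.
  + move=> i Hi. case: (i =P k.+1) => // E; lia.
  + rewrite vrS eqxx vr0 //. move=> i Hi. case: (i =P k.+1) => // E; lia.
  + rewrite eqxx. lia.
  + move=> i Hi. case: (i =P k.+1) => // E; lia.
Qed.

Definition Enum (P : nat -> Prop) (q : nat -> nat) :=
  (forall i j, 1 <= i -> i < j -> q i < q j) /\
  (forall n, P n <-> exists j, 1 <= j /\ q j = n).

Lemma en_le P q i j : Enum P q -> 1 <= i -> i <= j -> q i <= q j.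
Proof.
move=> [Hm _] Hi; rewrite leq_eqVlt => /orP[/eqP->//|H]. exact: ltnW (Hm _ _ Hi H).
Qed.
Lemma en_P P q j : Enum P q -> 1 <= j -> P (q j).
Proof. move=> [_ HP] Hj. apply/HP. by exists j. Qed.
Lemma en_next P q x j : Enum P q -> P x -> 1 <= j -> q j < x -> q j.+1 <= x.
Proof.
move=> [Hm HP] Hx Hj Hlt. have [j' [Hj' Ex]] := (proj1 (HP x)) Hx. subst x.
case: (leqP j' j) => H.
  have := @en_le P q j' j (conj Hm HP) Hj' H. lia.
exact: (@en_le P q j.+1 j' (conj Hm HP)).
Qed.
Lemma en_first P q x : Enum P q -> P x -> q 1 <= x.
Proof.
move=> [Hm HP] Hx. have [j' [Hj' Ex]] := (proj1 (HP x)) Hx. subst x.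
exact: (@en_le P q 1 j' (conj Hm HP)).
Qed.

Lemma shift P q s D W L : Enum P q -> 1 <= s -> q s < D -> D <= q s.+1 ->
  (forall x, x < W -> (P (D + x) <-> P x)) -> q L < W ->
  forall i, 1 <= i <= L -> q (s + i) = D + q i.
Proof.
move=> HE Hs H1 H2 HW HL.
elim=> [|i IH] Hi; first lia.
case: (posnP i) => Hi0.
- subst i. rewrite addn1.
  have HqL := @en_le P q 1 L HE isT ltac:(lia).
  have Pa : P (D + q 1) := proj2 (HW (q 1) ltac:(lia)) (@en_P P q 1 HE isT).
  have Hle := @en_next P q (D + q 1) s HE Pa Hs ltac:(lia).
  have Py : P (q s.+1 - D).
    have Hy : q s.+1 - D < W by lia. have E : q s.+1 = D + (q s.+1 - D) by lia. have := @en_P P q s.+1 HE isT. rewrite {1}E. exact: (proj1 (HW _ Hy)).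
  have := @en_first P q _ HE Py. lia.
- have IH' := IH ltac:(lia).
  have HqL := @en_le P q i.+1 L HE isT ltac:(lia).
  have Hmi := proj1 HE i i.+1 Hi0 (ltnSn i).
  have Pa : P (D + q i.+1) := proj2 (HW (q i.+1) ltac:(lia)) (@en_P P q i.+1 HE isT).
  have Hle := @en_next P q (D + q i.+1) (s + i) HE Pa ltac:(lia) ltac:(lia).
  rewrite addnS in Hle *.
  have Hmsi := proj1 HE (s+i) (s+i).+1 ltac:(lia) (ltnSn _).
  have Py : P (q (s+i).+1 - D).
    have Hy : q (s+i).+1 - D < W by lia. have E : q (s+i).+1 = D + (q (s+i).+1 - D) by lia. have := @en_P P q (s+i).+1 HE isT. rewrite {1}E. exact: (proj1 (HW _ Hy)).
  have := @en_next P q _ i HE Py Hi0 ltac:(lia). lia.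
Qed.

Lemma shift_end P q s D W L V : Enum P q -> 1 <= L -> q (s + L) = D + q L ->
  (forall x, x < W -> (P (D + x) <-> P x)) -> V <= W -> V <= q L.+1 ->
  D + V <= q (s + L).+1.
Proof.
move=> HE HL Heq HW HVW HV. case: (leqP (D + V) (q (s + L).+1)) => // Hc.
have Hmsi := proj1 HE (s+L) (s+L).+1 ltac:(lia) (ltnSn _).
have Py : P (q (s+L).+1 - D).
  have Hy : q (s+L).+1 - D < W by lia. have E : q (s+L).+1 = D + (q (s+L).+1 - D) by lia. have := @en_P P q (s+L).+1 HE isT. rewrite {1}E. exact: (proj1 (HW _ Hy)).
have := @en_next P q _ L HE Py HL ltac:(lia). lia.
Qed.

Definition Aa t := F (2*t.+1).+1.
Definition Bb t := F (2*t.+1).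
Lemma AS t : Aa t.+1 = Aa t + Aa t + Bb t.
Proof. rewrite /Aa /Bb Fo1 Fe1. lia. Qed.
Lemma BS t : Bb t.+1 = Aa t + Bb t.
Proof. rewrite /Aa /Bb Fe1. lia. Qed.
Lemma BltA t : Bb t < Aa t.
Proof. rewrite /Aa /Bb Fo1. have := Fpos (2*t). lia. Qed.
Lemma Bpos t : 0 < Bb t. Proof. exact: Fpos. Qed.

Definition Cnt k q t :=
  q (Aa t) < F (2*(k+t).+1) <= q (Aa t).+1 /\
  q (Bb t) < F (2*(k+t)).+1 <= q (Bb t).+1.

Lemma base k q : Enum (Pk k) q -> 1 <= k -> Cnt k q 0.
Proof.
move=> HE Hk. rewrite /Cnt /Aa /Bb addn0.
case: k Hk HE => [//|k] _ HE.
have E1 := Fo1 k. have E2 := Fe1 k. have E3 := Fe1 k.+1. have P1 := Fpos (2*k).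
set a := F (2*k.+1) in E1 E2 E3 *.
set Y := F (2*k.+1).+1 in E1 E3 *.
set X := F (2*k.+2) in E3 *.
have Hs0 := @S0 k.+1.
have Pa : Pk k.+1 a by apply: (proj2 (Hs0 a isT ltac:(lia))); left.
have Pb : Pk k.+1 (2*a) by apply: (proj2 (Hs0 (2*a) isT ltac:(lia))); right.
have Hin : forall x, Pk k.+1 x -> x < X -> x = a \/ x = 2*a.
  by move=> x Px Hx; apply: (proj1 (Hs0 x isT Hx)).
have q1 : q 1 = a.
  have H1 := @en_first _ q a HE Pa.
  have := Hin (q 1) (@en_P _ q 1 HE isT) ltac:(lia). lia.
have q2 : q 2 = 2*a.
  have H1 := @en_next _ q (2*a) 1 HE Pb isT ltac:(lia).
  have := proj1 HE 1 2 isT isT.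
  have := Hin (q 2) (@en_P _ q 2 HE isT) ltac:(lia). lia.
have q3 : X <= q 3.
  case: (leqP X (q 3)) => // H.
  have := proj1 HE 2 3 isT isT.
  have := Hin (q 3) (@en_P _ q 3 HE isT) H. lia.
have -> : F 3 = 2 by []. have -> : F 2 = 1 by [].
rewrite q1 q2. lia.
Qed.

Lemma step k q t : Enum (Pk k) q -> 1 <= k -> Cnt k q t ->
  (forall i, 1 <= i <= Aa t -> q (Aa t + i) = F (2*(k+t).+1) + q i) /\
  (forall i, 1 <= i <= Bb t -> q (Aa t + Aa t + i) = 2 * F (2*(k+t).+1) + q i) /\
  Cnt k q t.+1.
Proof.
move=> HE Hk [/andP[HA1 HA2] /andP[HB1 HB2]].
set m := k + t in HA1 HA2 HB1 HB2 *.
set X := F (2*m.+1) in HA1 HA2 *.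
set Y := F (2*m).+1 in HB1 HB2 *.
have hAB := BltA t. have hB := Bpos t.
have Hkm : k <= m by rewrite /m; lia.
have HW1 : forall x, x < X -> (Pk k (X + x) <-> Pk k x) := fun x Hx => @S1 k m x Hk Hkm Hx.
have HW2 : forall x, x < Y -> (Pk k (2 * X + x) <-> Pk k x) := fun x Hx => @S2 k m x Hk Hkm Hx.
have Sh1 := @shift _ q (Aa t) X X (Aa t) HE ltac:(lia) HA1 HA2 HW1 HA1.
have E1 := Sh1 (Aa t) ltac:(lia).
have End1 := @shift_end _ q (Aa t) X X (Aa t) X HE ltac:(lia) E1 HW1 (leqnn _) HA2.
have Hq2 : q (Aa t + Aa t) < 2 * X by rewrite E1; lia.
have Sh2 := @shift _ q (Aa t + Aa t) (2*X) Y (Bb t) HE ltac:(lia) Hq2 ltac:(lia) HW2 HB1.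
have E2 := Sh2 (Bb t) ltac:(lia).
have End2 := @shift_end _ q (Aa t + Aa t) (2*X) Y (Bb t) Y HE ltac:(lia) E2 HW2 (leqnn _) HB2.
split; first exact: Sh1. split; first exact: Sh2.
rewrite /Cnt AS BS addnS.
have -> : F (2 * (k+t).+2) = 2 * X + Y by rewrite F2.
have -> : F (2 * (k+t).+1).+1 = X + Y by rewrite Fo1.
have E3 := Sh1 (Bb t) ltac:(lia).
have E4 := Sh1 (Bb t).+1 ltac:(lia).
have E4p : q (Aa t + Bb t).+1 = X + q (Bb t).+1 by rewrite -addnS. rewrite E4p E3 E2. have := HB2. lia.
Qed.

Lemma cnt_all k q t : Enum (Pk k) q -> 1 <= k -> Cnt k q t.
Proof.
move=> HE Hk; elim: t => [|t IH]; first exact: base.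
by have [_ [_ ?]] := @step k q t HE Hk IH.
Qed.

Theorem proposition4p1 (k l : nat) (q : nat -> nat) :
  1 <= k -> 1 <= l ->
  (forall i j, 1 <= i -> i < j -> q i < q j) ->
  (forall n, A2k k n <-> exists j, 1 <= j /\ q j = n) ->
  forall j, 1 + F (2 * l + 1) <= j -> j <= F (2 * l + 3) - 1 ->
    q (j + 1) - q j = q (j - F (2 * l + 1) + 1) - q (j - F (2 * l + 1)).
Proof.
move=> Hk Hl Hm HA j.
have HE : Enum (Pk k) q.
  split=> // n. rewrite -(@A2k_Pk k n Hk). exact: HA.
case: l Hl => [//|t] _.
have -> : 2 * t.+1 + 1 = (2*t.+1).+1 by lia.
have -> : 2 * t.+1 + 3 = (2*t.+2).+1 by lia.
rewrite -/(Aa t) -/(Aa t.+1) AS => Hj1 Hj2.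
have HC := @cnt_all k q t HE Hk.
have [Sh1 [Sh2 _]] := @step k q t HE Hk HC.
have [/andP[HA1 _] _] := HC.
have hAB := BltA t. have hB := Bpos t.
set a := Aa t in Sh1 Sh2 HA1 Hj1 Hj2 hAB *.
set b := Bb t in Sh2 Hj2 hAB hB *.
set X := F (2*(k+t).+1) in Sh1 Sh2 HA1 *.
case: (ltnP j (a + a)) => H1.
-
  have -> : j = a + (j - a) by lia.
  have -> : a + (j - a) + 1 = a + (j - a + 1) by lia.
  have -> : a + (j - a) - a = j - a by lia.
  rewrite Sh1 ?Sh1; [|lia|lia]. lia.
case: (leqP j (a + a)) => H2.
- have -> : j = a + a by lia.
  rewrite (Sh2 1 ltac:(lia)).
  rewrite (Sh1 a ltac:(lia)).
  have -> : a + a - a + 1 = a + 1 by lia.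
  have -> : a + a - a = a by lia.
  rewrite (Sh1 1 ltac:(lia)). lia.
- have -> : j = a + a + (j - a - a) by lia.
  have -> : a + a + (j - a - a) + 1 = a + a + (j - a - a + 1) by lia.
  have -> : a + a + (j - a - a) - a = a + (j - a - a) by lia.
  have -> : a + (j - a - a) + 1 = a + (j - a - a + 1) by lia.
  rewrite Sh2 ?Sh2 ?Sh1 ?Sh1; try lia.
Qed.
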